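(* Let $P,Q$ be $n\times n$ matrices with all entries in $(0,1)$, stochastic by columns (i.e. $\sum_{i=1}^nP(i,j)=\sum_{i=1}^nQ(i,j)=1$ for each $j$), and suppose that for some $\epsilon>0$, $e^{-\epsilon}\le P(i,j)/Q(i,j)\le e^{\epsilon}$ for all $i,j$. Then the maximal eigenvalue of both $P$ and $Q$ is $1$, and their associated positive right eigenvectors $u,v$ satisfy \[ d_p(u,v)\le\frac{2\epsilon}{1-\min(\tau_P,\tau_Q)}, \] where $\tau_P,\tau_Q$ are the Birkhoff contraction coefficients of $P$ and $Q$.
   Context: For $\pmb{x},\pmb{y}\in(0,\infty)^n$, the projective pseudo-distance is $d_p(\pmb{x},\pmb{y})=\max_i\log(x_i/y_i)-\min_i\log(x_i/y_i)$. For a primitive matrix $M$ (nonnegative with some power strictly positive) with primitivity index $\ell$ (the least $\ell$ with $M^\ell>0$), the Birkhoff contraction coefficient is $\tau_M=\dfrac{1-\sqrt{\theta}}{1+\sqrt{\theta}}$ with $\theta=\min_{i,j,k,l}\dfrac{M^\ell(i,j)M^\ell(k,l)}{M^\ell(i,l)M^\ell(k,j)}$. For a positive matrix, $\ell=1$. *)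

(* Defs.v *)
From HB Require Import structures.
From mathcomp Require Import all_boot all_order all_algebra.
From mathcomp Require Import complex.
From mathcomp Require Import reals sequences exp.
Set Implicit Arguments. Unset Strict Implicit. Unset Printing Implicit Defensive.
Import Order.TTheory GRing.Theory Num.Theory.
Local Open Scope ring_scope.

(* Matrices are indexed by 'I_n.+1 (size n+1 >= 1). *)

Definition dproj {R : realType} {n : nat} (x y : 'cV[R]_n.+1) : R :=
  \big[Num.max/ln (x ord0 0 / y ord0 0)]_(i < n.+1) ln (x i 0 / y i 0)
  - \big[Num.min/ln (x ord0 0 / y ord0 0)]_(i < n.+1) ln (x i 0 / y i 0).

(* theta = min_{i,j,k,l} M(i,j) M(k,l) / (M(i,l) M(k,j)) for a positive
   matrix M (primitivity index 1).  The seed value 1 is the term i=k, j=l,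
   so it does not change the minimum. *)
Definition birkhoff_theta {R : realType} {n : nat} (M : 'M[R]_n.+1) : R :=
  \big[Num.min/1]_(i < n.+1) \big[Num.min/1]_(j < n.+1)
   \big[Num.min/1]_(k < n.+1) \big[Num.min/1]_(l < n.+1)
     (M i j * M k l / (M i l * M k j)).

Definition birkhoff_tau {R : realType} {n : nat} (M : 'M[R]_n.+1) : R :=
  (1 - Num.sqrt (birkhoff_theta M)) / (1 + Num.sqrt (birkhoff_theta M)).

Definition positive_vec {R : realType} {n : nat} (x : 'cV[R]_n.+1) : Prop :=
  forall i, 0 < x i 0.

Definition cmx {R : realType} {n : nat} (M : 'M[R]_n.+1) : 'M[R[i]]_n.+1 :=
  map_mx (fun a : R => Complex a 0) M.

(* "The maximal eigenvalue of M is 1": 1 is an eigenvalue and every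
   (complex) eigenvalue has modulus at most 1. *)
Definition max_eigenvalue_is_one {R : realType} {n : nat} (M : 'M[R]_n.+1) : Prop :=
  eigenvalue (cmx M) 1 /\ (forall lam : R[i], eigenvalue (cmx M) lam -> `|lam| <= 1).

(* Main.v *)
Require Import Defs.
From HB Require Import structures.
From mathcomp Require Import all_boot all_order all_algebra.
From mathcomp Require Import complex.
From mathcomp Require Import reals sequences exp.
From mathcomp Require Import boolp classical_sets derive realfun topology normedtype.
From mathcomp Require Import ring lra.
Import Order.TTheory GRing.Theory Num.Theory numFieldNormedType.Exports.
Local Open Scope ring_scope.
Local Open Scope classical_set_scope.
Lemma der_lnaff (R : realType) (A B x : R) : 0 < A -> 0 < B ->
  is_derive x 1 (fun t => ln (B + expR t * A)) ((B + expR x * A)^-1 * (expR x * A)).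
Proof.
move=> A0 B0.
have pos : 0 < B + expR x * A by rewrite addr_gt0 // mulr_gt0 // expR_gt0.
have h1 : is_derive x 1 (fun t : R => B + expR t * A) (expR x * A).
  have hM : is_derive x 1 (fun t : R => expR t * A) (expR x * A).
    have := is_deriveZ A (is_derive_expR x).
    have -> : A \*: (expR : R -> R) = (fun t : R => expR t * A).
      by apply: funext => t /=; rewrite mulrC.
    by rewrite /GRing.scale /= mulrC.
  have := is_deriveD (@is_derive_cst R R^o R^o B x 1) hM.
  by rewrite add0r.
have H := (@is_derive1_comp R (@ln R) (fun t => B + expR t * A) x _ _ (is_derive1_ln pos) h1). exact H.
Qed.

Lemma alg_ineq (R : realType) (s a b : R) : 0 <= s <= 1 -> 0 <= a -> 0 <= b -> s^+2 * a <= b ->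
  a / (1 + a) - b / (1 + b) <= (1 - s) / (1 + s).
Proof.
move=> /andP[s0 s1] a0 b0 hab.
have h1 : 0 < 1 + a by lra.
have h2 : 0 < 1 + b by lra.
have h3 : 0 < 1 + s by lra.
rewrite -subr_ge0.
have -> : (1 - s) / (1 + s) - (a / (1 + a) - b / (1 + b)) =
  ((1 - s) * (1 + a) * (1 + b) - (1 + s) * (a - b)) / ((1 + s) * (1 + a) * (1 + b)).
  by field; rewrite ?gt_eqF // !mulr_gt0.
apply: divr_ge0; last by rewrite !mulr_ge0 // ltW.
have E : (1 - s) * (1 + a) * (1 + b) - (1 + s) * (a - b) =
  (1 - s) * (s * a - 1)^+2 + (b - s^+2 * a) * ((1 - s) * (1 + a) + (1 + s)).
  by ring.
rewrite E; apply: addr_ge0; first by apply: mulr_ge0; [lra| exact: sqr_ge0].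
apply: mulr_ge0; first lra.
apply: addr_ge0; last lra. by apply: mulr_ge0; lra.
Qed.

Definition tauf {R : realType} (th : R) := (1 - Num.sqrt th) / (1 + Num.sqrt th).

Lemma key_scalar (R : realType) (A1 B1 A2 B2 th t : R) :
  0 < A1 -> 0 < B1 -> 0 < A2 -> 0 < B2 -> 0 < th <= 1 ->
  th * (A1 * B2) <= A2 * B1 -> 0 <= t ->
  ln (B1 + expR t * A1) - ln (B2 + expR t * A2) - (ln (B1 + A1) - ln (B2 + A2))
   <= tauf th * t.
Proof.
move=> A10 B10 A20 B20 /andP[th0 th1] hth t0.
pose F := fun x : R => tauf th * x - ln (B1 + expR x * A1) + ln (B2 + expR x * A2).
pose dF := fun x : R => tauf th - (B1 + expR x * A1)^-1 * (expR x * A1)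
   + (B2 + expR x * A2)^-1 * (expR x * A2).
have dFP (x : R) : is_derive x 1 F (dF x).
  have h0 : is_derive x 1 (fun y : R => tauf th * y) (tauf th).
    have := is_deriveZ (tauf th) (@is_derive_id R R^o x 1).
    by rewrite /GRing.scale /= mulr1.
  exact: is_deriveD (is_deriveB h0 (@der_lnaff R A1 B1 x A10 B10)) (@der_lnaff R A2 B2 x A20 B20).
have Fc : {within `[0, t], continuous F}.
  apply/continuous_subspaceT => r.
  apply/differentiable_continuous/derivable1_diffP. exact: (@ex_derive R R^o R^o r 1 F (dF r) (dFP r)).
have [c _ Hc] := MVT_segment t0 (fun x _ => dFP x) Fc.
have dFc : 0 <= dF c.
  suff key : (B1 + expR c * A1)^-1 * (expR c * A1) - (B2 + expR c * A2)^-1 * (expR c * A2) <= tauf th.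
    rewrite /dF; lra.
  set a := expR c * A1 / B1; set b := expR c * A2 / B2.
  have ea : (B1 + expR c * A1)^-1 * (expR c * A1) = a / (1 + a).
    rewrite /a; field. 
    by apply/andP; split; rewrite gt_eqF // ?addr_gt0 // ?mulr_gt0 // expR_gt0.
  have eb : (B2 + expR c * A2)^-1 * (expR c * A2) = b / (1 + b).
    rewrite /b; field.
    by apply/andP; split; rewrite gt_eqF // ?addr_gt0 // ?mulr_gt0 // expR_gt0.
  rewrite ea eb.
  have s0 : 0 <= Num.sqrt th <= 1.
    by rewrite sqrtr_ge0 /= -sqrtr1 ler_sqrt.
  apply: alg_ineq => //.
  - by rewrite /a divr_ge0 // ?mulr_ge0 // ltW // expR_gt0.
  - by rewrite /b divr_ge0 // ?mulr_ge0 // ltW // expR_gt0.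
  rewrite sqr_sqrtr; last exact: ltW.
  rewrite /a /b.
  have e1 : th * (expR c * A1 / B1) = (expR c / (B1 * B2)) * (th * (A1 * B2)).
    by field; rewrite !gt_eqF.
  have e2 : expR c * A2 / B2 = (expR c / (B1 * B2)) * (A2 * B1).
    by field; rewrite !gt_eqF.
  rewrite e1 e2; apply: ler_wpM2l => //.
  apply: divr_ge0; [exact/ltW/expR_gt0 | apply: mulr_ge0; exact: ltW].
have : F 0 <= F t.
  by rewrite -subr_ge0 Hc subr0; apply: mulr_ge0.
rewrite /F expR0 !mul1r mulr0 sub0r.
lra.
Qed.
Local Close Scope classical_set_scope.
Section Dp.
Variables (R : realType) (n : nat).
Implicit Types (x y z : 'cV[R]_n.+1).

Definition fr x y (i : 'I_n.+1) := ln (x i 0 / y i 0).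

Lemma dprojE x y : dproj x y =
  \big[Num.max/fr x y ord0]_(i < n.+1) fr x y i - \big[Num.min/fr x y ord0]_(i < n.+1) fr x y i.
Proof. by []. Qed.

Lemma dproj_le x y c : (forall i j, fr x y i - fr x y j <= c) -> dproj x y <= c.
Proof.
move=> H; rewrite dprojE lerBlDr.
apply: bigmax_le => [|i _].
  rewrite -lerBlDl; apply: le_bigmin => [|j _]; first by rewrite lerBlDl -lerBlDr H.
  by rewrite lerBlDl -lerBlDr H.
rewrite -lerBlDl; apply: le_bigmin => [|j _]; by rewrite lerBlDl -lerBlDr H.
Qed.

Lemma dproj_ge x y i j : fr x y i - fr x y j <= dproj x y.
Proof.
rewrite dprojE; apply: lerB; first exact: le_bigmax.
exact: bigmin_le.
Qed.

Lemma dproj_ge0 x y : 0 <= dproj x y.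
Proof. by have := dproj_ge x y ord0 ord0; rewrite subrr. Qed.
End Dp.
Arguments fr {R n}.
Arguments dproj_le {R n}.
Arguments dproj_ge {R n}.
Arguments dproj_ge0 {R n}.
Lemma sum_ge_term {R : realType} {n : nat} (G : 'I_n.+1 -> R) j0 :
  (forall j, 0 <= G j) -> G j0 <= \sum_j G j.
Proof.
move=> H; rewrite (bigD1 j0) //= lerDl; exact: sumr_ge0.
Qed.

Section Theta.
Variables (R : realType) (n : nat) (P : 'M[R]_n.+1).
Hypothesis Ppos : forall i j, 0 < P i j.

Lemma theta_le i j k l : birkhoff_theta P <= P i j * P k l / (P i l * P k j).
Proof.
rewrite /birkhoff_theta.
apply: le_trans (bigmin_le _ i _) _.
apply: le_trans (bigmin_le _ j _) _.
apply: le_trans (bigmin_le _ k _) _.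
exact: bigmin_le.
Qed.

Lemma theta_gt0 : 0 < birkhoff_theta P.
Proof.
rewrite /birkhoff_theta.
apply: lt_bigmin => // i _; apply: lt_bigmin => // j _.
apply: lt_bigmin => // k _; apply: lt_bigmin => // l _.
by rewrite divr_gt0 // mulr_gt0.
Qed.

Lemma theta_le1 : birkhoff_theta P <= 1.
Proof. exact: bigmin_le_id. Qed.

Lemma mulpos (v : 'cV[R]_n.+1) : positive_vec v -> positive_vec (P *m v).
Proof.
move=> hv i; rewrite mxE.
apply: (lt_le_trans _ (sum_ge_term (fun j => P i j * v j 0) ord0 _)).
  by rewrite mulr_gt0.
by move=> j; rewrite mulr_ge0 // ltW.
Qed.
End Theta.
Arguments theta_le {R n P}.
Arguments theta_gt0 {R n P}.
Arguments theta_le1 {R n}.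
Arguments mulpos {R n P} Ppos {v}.
Lemma bigmin_att {R : realType} {n} (F : 'I_n.+1 -> R) :
  exists j, \big[Num.min/F ord0]_(i < n.+1) F i = F j.
Proof.
case: (@arg_minP _ _ _ ord0 predT F isT) => j _ Hj.
exists j; apply: le_anti; rewrite bigmin_le /=.
by apply: le_bigmin => [|i _]; apply: Hj.
Qed.
Lemma bigmax_att {R : realType} {n} (F : 'I_n.+1 -> R) :
  exists j, \big[Num.max/F ord0]_(i < n.+1) F i = F j.
Proof.
case: (@arg_maxP _ _ _ ord0 predT F isT) => j _ Hj.
exists j; apply: le_anti; rewrite le_bigmax andbT.
by apply: bigmax_le => [|i _]; apply: Hj.
Qed.
Section Contr.
Variables (R : realType) (n : nat) (P : 'M[R]_n.+1).
Hypothesis Ppos : forall i j, 0 < P i j.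

Lemma lnpos (a : R) : 0 < a -> a \is Num.pos. Proof. by rewrite posrE. Qed.

Lemma contract (x y : 'cV[R]_n.+1) : positive_vec x -> positive_vec y ->
  dproj (P *m x) (P *m y) <= birkhoff_tau P * dproj x y.
Proof.
move=> xp yp.
set F := fr x y.
set lo := \big[Num.min/F ord0]_(i < n.+1) F i.
set hi := \big[Num.max/F ord0]_(i < n.+1) F i.
have dE : dproj x y = hi - lo by [].
have [jl jlE] := bigmin_att F.
have [jh jhE] := bigmax_att F.
rewrite -/lo in jlE; rewrite -/hi in jhE.
have loF j : lo <= F j by apply: bigmin_le.
have hiF j : F j <= hi by apply: le_bigmax.
have xE j : x j 0 = expR (F j) * y j 0.
  rewrite /F /fr lnK; last by rewrite posrE divr_gt0.
  by rewrite divfK // lt0r_neq0.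
set m := expR lo; set M := expR hi.
have m0 : 0 < m by apply: expR_gt0.
set a := fun j => x j 0 - m * y j 0.
set b := fun j => M * y j 0 - x j 0.
have a0 j : 0 <= a j.
  rewrite /a xE subr_ge0; apply: ler_wpM2r; first exact: ltW.
  by rewrite /m ler_expR.
have b0 j : 0 <= b j.
  rewrite /b xE subr_ge0; apply: ler_wpM2r; first exact: ltW.
  by rewrite /M ler_expR.
set A := fun i => \sum_j P i j * a j.
set B := fun i => \sum_j P i j * b j.
have PxE i : (P *m x) i 0 = m * (P *m y) i 0 + A i.
  rewrite !mxE /A /a mulr_sumr -big_split /=; apply: eq_bigr => j _; ring.
have PyE i : (M - m) * (P *m y) i 0 = A i + B i.
  rewrite !mxE /A /B /a /b mulr_sumr -big_split /=; apply: eq_bigr => j _; ring.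
have tau0 : 0 <= birkhoff_tau P.
  rewrite /birkhoff_tau divr_ge0 //.
    by rewrite subr_ge0 -sqrtr1 ler_sqrt ?theta_le1.
  by rewrite addr_ge0 ?sqrtr_ge0.
have [hlo | hlt] := eqVneq hi lo.
  have Az i : A i = 0.
    apply: big1 => j _; suff -> : a j = 0 by rewrite mulr0.
    rewrite /a xE; have -> : F j = lo by apply: le_anti; rewrite loF -hlo hiF.
    by rewrite subrr.
  apply: dproj_le => i j; rewrite dE hlo subrr mulr0.
  rewrite /fr !PxE !Az !addr0 !mulfK ?subrr //; apply: lt0r_neq0; exact: mulpos.
have ltlh : lo < hi by rewrite lt_neqAle eq_sym hlt /= jhE loF.
have Mm : 0 < M - m by rewrite subr_gt0 ltr_expR.
have Apos i : 0 < A i.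
  apply: (lt_le_trans _ (sum_ge_term (fun j => P i j * a j) jh _)) => //.
  rewrite mulr_gt0 // /a xE -jhE -/M -mulrBl mulr_gt0 //.
  by move=> j; rewrite mulr_ge0 // ltW.
have Bpos i : 0 < B i.
  apply: (lt_le_trans _ (sum_ge_term (fun j => P i j * b j) jl _)) => //.
  rewrite mulr_gt0 // /b xE -jlE -/m -mulrBl mulr_gt0 //.
  by move=> j; rewrite mulr_ge0 // ltW.
have cross i k : birkhoff_theta P * (A i * B k) <= A k * B i.
  rewrite /A /B !big_distrlr mulr_sumr /=; apply: ler_sum => j _.
  rewrite mulr_sumr; apply: ler_sum => l _.
  have h := @theta_le R n P k j i l.
  rewrite ler_pdivlMr ?mulr_gt0 // in h.
  have e1 : birkhoff_theta P * (P i j * a j * (P k l * b l)) =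
     (birkhoff_theta P * (P k l * P i j)) * (a j * b l) by ring.
  have e2 : P k j * a j * (P i l * b l) = (P k j * P i l) * (a j * b l) by ring.
  by rewrite e1 e2 ler_wpM2r // mulr_ge0.
have ratE i : fr (P *m x) (P *m y) i =
    lo + (ln (B i + expR (hi - lo) * A i) - ln (B i + A i)).
  have py0 : (P *m y) i 0 != 0 by apply: lt0r_neq0; exact: mulpos.
  have Mdef : M = m * expR (hi - lo) by rewrite /M /m -expRD addrC subrK.
  have pyE : (P *m y) i 0 = (A i + B i) / (M - m).
    by rewrite -PyE mulrAC divff ?mul1r // lt0r_neq0.
  rewrite /fr.
  have -> : (P *m x) i 0 / (P *m y) i 0 =
      m * ((B i + expR (hi - lo) * A i) / (B i + A i)).
    rewrite PxE pyE Mdef.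
    field.
    by rewrite lt0r_neq0 ?addr_gt0 //= -Mdef lt0r_neq0.
  rewrite lnM ?lnpos ?divr_gt0 ?addr_gt0 ?mulr_gt0 ?expR_gt0 //.
  rewrite ln_div ?lnpos ?addr_gt0 ?mulr_gt0 ?expR_gt0 //.
  by rewrite /m expRK.
apply: dproj_le => i k; rewrite !ratE dE.
have := @key_scalar R _ _ _ _ _ _ (Apos i) (Bpos i) (Apos k) (Bpos k)
   (introT andP (conj (theta_gt0 Ppos) (theta_le1 P))) (cross i k) (ltW (etrans (subr_gt0 lo hi) ltlh)).
have -> : birkhoff_tau P = tauf (birkhoff_theta P) by [].
set T := tauf _ * _.
lra.
Qed.
End Contr.
Section Bound.
Variables (R : realType) (n : nat).

Lemma frE (x y : 'cV[R]_n.+1) i : positive_vec x -> positive_vec y ->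
  fr x y i = ln (x i 0) - ln (y i 0).
Proof. by move=> xp yp; rewrite /fr ln_div // posrE. Qed.

Lemma dproj_tri (x y z : 'cV[R]_n.+1) : positive_vec x -> positive_vec y -> positive_vec z ->
  dproj x z <= dproj x y + dproj y z.
Proof.
move=> xp yp zp; apply: dproj_le => i j.
have h1 := dproj_ge x y i j; have h2 := dproj_ge y z i j.
rewrite !frE // in h1 h2 *. lra.
Qed.

Lemma pert (P Q : 'M[R]_n.+1) (eps : R) :
  (forall i j, 0 < P i j) -> (forall i j, 0 < Q i j) ->
  (forall i j, expR (- eps) <= P i j / Q i j <= expR eps) ->
  forall v, positive_vec v -> dproj (P *m v) (Q *m v) <= 2 * eps.
Proof.
move=> Pp Qp hPQ v vp.
have Pv := mulpos Pp vp; have Qv := mulpos Qp vp.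
have hb i : - eps <= fr (P *m v) (Q *m v) i <= eps.
  have up : (P *m v) i 0 <= expR eps * (Q *m v) i 0.
    rewrite !mxE mulr_sumr; apply: ler_sum => j _.
    rewrite mulrA; apply: ler_wpM2r; first exact: ltW.
    by have /andP[_ h] := hPQ i j; rewrite ler_pdivrMr // in h; rewrite mulrC.
  have lo : expR (- eps) * (Q *m v) i 0 <= (P *m v) i 0.
    rewrite !mxE mulr_sumr; apply: ler_sum => j _.
    rewrite mulrA; apply: ler_wpM2r; first exact: ltW.
    by have /andP[h _] := hPQ i j; rewrite ler_pdivlMr // in h.
  rewrite /fr; apply/andP; split.
    rewrite -[X in X <= _]expRK ler_ln ?posrE ?expR_gt0 ?divr_gt0 //.
    by rewrite ler_pdivlMr.
  rewrite -[X in _ <= X]expRK ler_ln ?posrE ?expR_gt0 ?divr_gt0 //.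
  by rewrite ler_pdivrMr.
apply: dproj_le => i j.
have /andP[h1 h2] := hb i; have /andP[h3 h4] := hb j. lra.
Qed.

Lemma tau_lt1 (P : 'M[R]_n.+1) : (forall i j, 0 < P i j) -> birkhoff_tau P < 1.
Proof.
move=> Pp; rewrite /birkhoff_tau.
have s0 : 0 < Num.sqrt (birkhoff_theta P) by rewrite sqrtr_gt0 theta_gt0.
rewrite ltr_pdivrMr ?addr_gt0 //. lra.
Qed.

Lemma main_bound (P Q : 'M[R]_n.+1) (eps : R) :
  (forall i j, 0 < P i j) -> (forall i j, 0 < Q i j) ->
  (forall i j, expR (- eps) <= P i j / Q i j <= expR eps) ->
  forall u v : 'cV[R]_n.+1, positive_vec u -> P *m u = u ->
         positive_vec v -> Q *m v = v ->
         dproj u v <= 2 * eps / (1 - Num.min (birkhoff_tau P) (birkhoff_tau Q)).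
Proof.
move=> Pp Qp hPQ u v up Pu vp Qv.
have h1 : dproj u v <= birkhoff_tau P * dproj u v + 2 * eps.
  have e : dproj u v = dproj (P *m u) (Q *m v) by rewrite Pu Qv.
  rewrite {1}e; apply: le_trans (@dproj_tri _ (P *m v) _ _ (mulpos Pp vp) _) _.
  - by rewrite Pu.
  - by rewrite Qv.
  apply: lerD; first exact: contract.
  exact: pert.
have h2 : dproj u v <= birkhoff_tau Q * dproj u v + 2 * eps.
  have e : dproj u v = dproj (P *m u) (Q *m v) by rewrite Pu Qv.
  rewrite {1}e; apply: le_trans (@dproj_tri _ (Q *m u) _ _ (mulpos Qp up) _) _.
  - by rewrite Pu.
  - by rewrite Qv.
  rewrite addrC; apply: lerD; [exact: (@contract _ _ Q Qp u v up vp) | exact: (@pert P Q eps Pp Qp hPQ u up)].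
have t1 := @tau_lt1 P Pp; have t2 := @tau_lt1 Q Qp.
case: (leP (birkhoff_tau P) (birkhoff_tau Q)) => _.
  rewrite ler_pdivlMr ?subr_gt0 //; move: h1; set d := dproj u v; set t := birkhoff_tau P; nra.
rewrite ler_pdivlMr ?subr_gt0 //; move: h2; set d := dproj u v; set t := birkhoff_tau Q; nra.
Qed.
End Bound.
Lemma eig1 (F : fieldType) (n : nat) (M : 'M[F]_n.+1) :
  (forall j, \sum_i M i j = 1) -> eigenvalue M 1.
Proof.
move=> Ms; apply/eigenvalueP; exists (const_mx 1).
  apply/rowP => j; rewrite !mxE mul1r.
  under eq_bigr do rewrite mxE mul1r.
  exact: Ms.
apply/eqP => /rowP /(_ ord0); rewrite !mxE => /eqP; by rewrite oner_eq0.
Qed.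

Local Open Scope complex_scope.
Section Eig.
Variables (R : realType) (n : nat) (P : 'M[R]_n.+1).
Hypothesis Ppos : forall i j, 0 < P i j.
Hypothesis Ps : forall j, \sum_i P i j = 1.

Lemma cmxE i j : cmx P i j = (P i j)%:C.
Proof. by rewrite /cmx mxE. Qed.

Lemma eig_bound lam : eigenvalue (cmx P) lam -> `|lam| <= 1.
Proof.
move=> /eigenvalueP [v vE vnz].
pose N j := ComplexField.Normc.normc (v 0 j).
case: (@arg_maxP _ _ _ ord0 predT N isT) => j0 _ Hj0.
have nE j : `|v 0 j| = (N j)%:C by [].
have vj0 : 0 < `|v 0 j0|.
  have [i hi] : exists i, v 0 i != 0.
    apply/existsP; apply: contraNT vnz => /existsPn H.
    by apply/eqP/rowP => j; rewrite mxE; apply/eqP/negbNE/H.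
  apply: (lt_le_trans (y := `|v 0 i|)); first by rewrite normr_gt0.
  by rewrite !nE lecR; apply: Hj0.
have e : lam * v 0 j0 = \sum_i v 0 i * (P i j0)%:C.
  have := congr1 (fun w : 'rV_n.+1 => w 0 j0) vE; rewrite !mxE => <-.
  by apply: eq_bigr => i _; rewrite cmxE.
rewrite -(ler_pM2r vj0) mul1r -normrM e.
apply: le_trans (ler_norm_sum _ _ _) _.
apply: (le_trans (y := \sum_i `|v 0 j0| * (P i j0)%:C)).
  apply: ler_sum => i _; rewrite normrM (ger0_norm (x := (P i j0)%:C)); last by rewrite ler0c ltW.
  apply: ler_wpM2r; first by rewrite ler0c ltW.
  by rewrite !nE lecR; apply: Hj0.
by rewrite -mulr_sumr -rmorph_sum Ps mulr1.
Qed.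

Lemma maxeig : max_eigenvalue_is_one P.
Proof.
split; last exact: eig_bound.
apply: eig1 => j; under eq_bigr do rewrite cmxE.
by rewrite -rmorph_sum Ps.
Qed.

Lemma nonneg_fix (u : 'cV[R]_n.+1) : (forall i, 0 <= u i 0) -> u != 0 ->
  P *m u = u -> positive_vec u.
Proof.
move=> u0 unz Pu.
have [j0 hj0] : exists j0, u j0 0 != 0.
  apply/existsP; apply: contraNT unz => /existsPn H.
  by apply/eqP/colP => j; rewrite mxE; apply/eqP/negbNE/H.
have uj0 : 0 < u j0 0 by rewrite lt_neqAle eq_sym hj0 u0.
move=> i; rewrite -Pu mxE.
apply: (lt_le_trans _ (sum_ge_term (fun j => P i j * u j 0) j0 _)).
  by rewrite mulr_gt0.
by move=> j; rewrite mulr_ge0 // ltW.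
Qed.

Lemma pf_vec : exists u, positive_vec u /\ P *m u = u.
Proof.
have h0 : \det (P - 1%:M) == 0.
  apply/det0P; exists (const_mx 1).
    apply/eqP => /rowP /(_ ord0); rewrite !mxE => /eqP; by rewrite oner_eq0.
  apply/rowP => j; rewrite mulmxBr mul_mx_scalar scale1r !mxE.
  under eq_bigr do rewrite mxE mul1r.
  by rewrite Ps subrr.
rewrite -det_tr in h0.
have /det0P [w wnz wE] := h0.
set u0 := w^T.
have u0nz : u0 != 0 by apply: contraNneq wnz => h; rewrite -[w]trmxK -/u0 h trmx0.
have Pu0 : P *m u0 = u0.
  have := congr1 trmx wE; rewrite trmx_mul trmxK trmx0 mulmxBl mul1mx.
  by move/eqP; rewrite subr_eq0 => /eqP.
set s := fun i => u0 i 0.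
have sE i : s i = \sum_j P i j * s j by rewrite /s -{1}Pu0 mxE.
have h1 i : `|s i| <= \sum_j P i j * `|s j|.
  rewrite {1}sE; apply: le_trans (ler_norm_sum _ _ _) _.
  apply: ler_sum => j _; rewrite normrM (ger0_norm (x := P i j)) //; exact: ltW.
have h2 : \sum_i (\sum_j P i j * `|s j| - `|s i|) = 0.
  rewrite sumrB exchange_big /=; apply/eqP; rewrite subr_eq0; apply/eqP; apply: eq_bigr => j _.
  by rewrite -mulr_suml Ps mul1r.
have h3 : \sum_j P ord0 j * `|s j| - `|s ord0| = 0.
  by apply: (psumr_eq0P _ h2) => // i _; rewrite subr_ge0.
move/eqP: h3; rewrite subr_eq0 => /eqP h3.
have [s0|s0] := leP 0 (s ord0).
  exists u0; split => //; apply: nonneg_fix => // i.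
  have h4 : \sum_j P ord0 j * (`|s j| - s j) = 0.
    rewrite (eq_bigr (fun j => P ord0 j * `|s j| - P ord0 j * s j)); last by move=> j _; rewrite mulrBr.
    by rewrite sumrB h3 -sE ger0_norm // subrr.
  have : P ord0 i * (`|s i| - s i) = 0.
    apply: (psumr_eq0P _ h4) => // j _; apply: mulr_ge0; first exact: ltW.
    by rewrite subr_ge0 ler_norm.
  move/eqP; rewrite mulf_eq0 gt_eqF //= subr_eq0 => /eqP h.
  by have := normr_ge0 (s i); rewrite h.
exists (- u0); split; last by rewrite mulmxN Pu0.
apply: nonneg_fix; last by rewrite mulmxN Pu0.
  move=> i; rewrite mxE oppr_ge0.
  have h4 : \sum_j P ord0 j * (`|s j| + s j) = 0.
    rewrite (eq_bigr (fun j => P ord0 j * `|s j| + P ord0 j * s j)); last by move=> j _; rewrite mulrDr.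
    by rewrite big_split /= h3 -sE ltr0_norm // addNr.
  have : P ord0 i * (`|s i| + s i) = 0.
    apply: (psumr_eq0P _ h4) => // j _; apply: mulr_ge0; first exact: ltW.
    by rewrite -lerBlDr sub0r -normrN ler_norm.
  move/eqP; rewrite mulf_eq0 gt_eqF //= addr_eq0 => /eqP h.
  have : 0 <= `|s i| by apply: normr_ge0.
  by rewrite h oppr_ge0.
by rewrite oppr_eq0.
Qed.
End Eig.
Local Close Scope complex_scope.

Theorem propositionA1 (R : realType) (n : nat) (P Q : 'M[R]_n.+1) (eps : R) :
  (forall i j, 0 < P i j < 1) -> (forall i j, 0 < Q i j < 1) ->
  (forall j, \sum_(i < n.+1) P i j = 1) -> (forall j, \sum_(i < n.+1) Q i j = 1) ->
  0 < eps ->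
  (forall i j, expR (- eps) <= P i j / Q i j <= expR eps) ->
  [/\ max_eigenvalue_is_one P, max_eigenvalue_is_one Q,
      (exists u, positive_vec u /\ P *m u = u),
      (exists v, positive_vec v /\ Q *m v = v) &
      (forall u v : 'cV[R]_n.+1, positive_vec u -> P *m u = u ->
         positive_vec v -> Q *m v = v ->
         dproj u v <= 2 * eps / (1 - Num.min (birkhoff_tau P) (birkhoff_tau Q)))].
Proof.
move=> Pb Qb Ps Qs eps0 hPQ.
have Pp i j : 0 < P i j by case/andP: (Pb i j).
have Qp i j : 0 < Q i j by case/andP: (Qb i j).
split.
- exact: (@maxeig R n P Pp Ps).
- exact: (@maxeig R n Q Qp Qs).
- exact: (@pf_vec R n P Pp Ps).
- exact: (@pf_vec R n Q Qp Qs).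
- move=> u v; exact: (@main_bound R n P Q eps Pp Qp hPQ u v).
Qed.
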